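(* Let $(\mathcal{L},[\,,\,])$ be a Lie algebra over $\mathbf{k}$ with basis $X=\{x_j:j\in J\}$ where $J$ is totally ordered, let $k\in\mathbf{k}$ be nonzero, and let $\hat A$, $\hat q$, $\hat x_j$, $R$ be as constructed below. Then every element of $\hat A$ is congruent modulo $R$ to a $\mathbf{k}$-linear combination of model monomials, where the model monomials are: (a) $\hat q\hat x_{j_1}\cdots\hat x_{j_m}$ with $m\ge0$, $j_1\le\cdots\le j_m$; (b) $\hat x_{i_1}\cdots\hat x_{i_t}\hat x_{j_0}\hat q\hat x_{j_1}\cdots\hat x_{j_m}$ with $t,m\ge0$, $i_1\le\cdots\le i_t$, $j_0\le j_1\le\cdots\le j_m$; (c) $\hat x_{j_1}\cdots\hat x_{j_m}$ with $m\ge0$, $j_1\le\cdots\le j_m$ (empty products being $\hat 1$).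
   Context: Construction: $\tilde q\notin X$ a symbol, $V$ the $\mathbf{k}$-vector space with basis $X\cup\{\tilde q\}$, $T(V)$ its tensor algebra, $I$ the two-sided ideal generated by $\tilde q\otimes\tilde q-\tilde q$ and all $\tilde q\otimes a\otimes\tilde q-\tilde q\otimes a$ ($a\in T(V)$), $\hat A=T(V)/I$, $\hat q=\tilde q+I$, $\hat 1=1+I$, $\hat x_j=x_j+I$, and $x\mapsto\hat x$ the linear extension to $\mathcal{L}$. $R$ is the two-sided ideal of $\hat A$ generated by all $\widehat{[x,y]}-\hat x\hat y+\hat y\hat x+\hat x\hat y\hat q-\hat y\hat x\hat q-k\hat x\hat q\hat y+k\hat y\hat q\hat x$, $x,y\in\mathcal{L}$. *)

(* Defs.v *)
From HB Require Import structures.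
From mathcomp Require Import all_boot all_order all_algebra.
Set Implicit Arguments. Unset Strict Implicit. Unset Printing Implicit Defensive.
Import Order.TTheory GRing.Theory.
Local Open Scope ring_scope.

Record is_lie_bracket (K : fieldType) (L : lmodType K) (br : L -> L -> L) : Prop := {
  lie_linl : forall (a : K) (x y z : L), br (a *: x + y) z = a *: br x z + br y z;
  lie_linr : forall (a : K) (x y z : L), br z (a *: x + y) = a *: br z x + br z y;
  lie_alt  : forall x : L, br x x = 0;
  lie_jacobi : forall x y z : L, br x (br y z) + br y (br z x) + br z (br x y) = 0
}.

Definition lincomb (K : fieldType) (L : lmodType K) (J : Type) (x : J -> L)
  (s : seq (K * J)) : L := \sum_(p <- s) p.1 *: x p.2.

Definition is_basis (K : fieldType) (L : lmodType K) (J : eqType) (x : J -> L) : Prop :=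
  (forall s : seq (K * J), uniq (map snd s) -> lincomb x s = 0 ->
       forall p, p \in s -> p.1 = 0)
  /\ (forall y : L, exists s : seq (K * J), y = lincomb x s).

(* Alphabet: [option J]; [Some j] stands for x_j and [None] for q~.
   An element of T(V) is represented by a formal finite sum
   sum_{(c,w) in p} c.w of words w; two representations denote the same
   element iff they have the same coefficients ([coef]). *)

Definition tpoly (K : fieldType) (A : Type) := seq (K * seq A).

Section TPoly.
Variables (K : fieldType) (A : eqType).
Implicit Types (p q : tpoly K A) (w : seq A).

Definition coef p w : K := \sum_(cw <- p) (if cw.2 == w then cw.1 else 0).
Definition tword w : tpoly K A := [:: (1, w)].
Definition tone : tpoly K A := tword [::].
Definition tadd p q : tpoly K A := p ++ q.
Definition tscale (c : K) p : tpoly K A := [seq (c * cw.1, cw.2) | cw <- p].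
Definition tsub p q : tpoly K A := p ++ tscale (-1) q.
Definition tmul p q : tpoly K A :=
  [seq (a.1 * b.1, a.2 ++ b.2) | a <- p, b <- q].

(* two-sided ideal of T(V) generated by the set G:
   p is (coefficientwise) a finite sum of terms c . u g v, u,v words, g in G *)
Definition in_ideal (G : tpoly K A -> Prop) p : Prop :=
  exists s : seq (K * seq A * tpoly K A * seq A),
    {in s, forall t, G t.1.2} /\
    coef p =1 coef (flatten
       [seq tmul (tmul (tscale t.1.1.1 (tword t.1.1.2)) t.1.2) (tword t.2) | t <- s]).
End TPoly.

Section Construction.
Variables (K : fieldType) (d : Order.disp_t) (J : orderType d).
Local Notation A := (option J).
Definition qt : tpoly K A := @tword K A [:: None].
Definition xt (j : J) : tpoly K A := @tword K A [:: Some j].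

Definition I_gens (g : tpoly K A) : Prop :=
  g = tsub (tmul qt qt) qt \/
  exists a : tpoly K A, g = tsub (tmul (tmul qt a) qt) (tmul qt a).

(* lifts to T(V) of the generators of R, for hat : L -> T(V) the linear
   extension of x_j |-> x_j *)
Definition R_gens (L : lmodType K) (br : L -> L -> L) (hat : L -> tpoly K A)
  (kappa : K) (g : tpoly K A) : Prop :=
  exists x y : L,
    let X := hat x in let Y := hat y in
    g = tadd (tadd (tadd (tadd (tadd (tadd
          (hat (br x y))
          (tscale (-1) (tmul X Y)))
          (tmul Y X))
          (tmul (tmul X Y) qt))
          (tscale (-1) (tmul (tmul Y X) qt)))
          (tscale (- kappa) (tmul (tmul X qt) Y)))
          (tscale kappa (tmul (tmul Y qt) X)).

Definition jsorted (s : seq J) : bool := sorted (@Order.le d J) s.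

Definition model_word (w : seq A) : Prop :=
  (exists s, jsorted s /\ w = None :: map Some s)
  \/ (exists s1 j0 s2, jsorted s1 /\ jsorted (j0 :: s2) /\
        w = map Some s1 ++ Some j0 :: None :: map Some s2)
  \/ (exists s, jsorted s /\ w = map Some s).
End Construction.

(* Main.v *)
Require Import Defs.
From HB Require Import structures.
From mathcomp Require Import all_boot all_order all_algebra.
From mathcomp Require Import ring zify.
From Stdlib Require Import Classical.
Set Implicit Arguments. Unset Strict Implicit. Unset Printing Implicit Defensive.
Import Order.TTheory GRing.Theory.
Local Open Scope ring_scope.

Section Gen.
Variables (K : fieldType) (A : eqType).
Local Notation tp := (tpoly K A).
Implicit Types (p q : tp) (w u v : seq A).

Lemma coef_cat p q w : coef (p ++ q) w = coef p w + coef q w.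
Proof. by rewrite /coef big_cat. Qed.
Lemma coef_nil w : coef ([::] : tp) w = 0.
Proof. by rewrite /coef big_nil. Qed.
Lemma coef_scale c p w : coef (tscale c p) w = c * coef p w.
Proof.
rewrite /coef big_map mulr_sumr; apply: eq_bigr => cw _ /=.
by case: ifP; rewrite ?mulr0.
Qed.
Lemma coef_tword u w : coef (tword K u) w = if u == w then 1 else 0.
Proof. by rewrite /coef /tword big_cons big_nil addr0. Qed.
Lemma coef_tsub p q w : coef (tsub p q) w = coef p w - coef q w.
Proof. by rewrite /tsub coef_cat coef_scale mulN1r. Qed.
Lemma coef_flatten (l : seq tp) w : coef (flatten l) w = \sum_(p <- l) coef p w.
Proof.
elim: l => [|p l IH]; first by rewrite big_nil coef_nil.
by rewrite /= coef_cat IH big_cons.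
Qed.

Definition wmap (f : seq A -> seq A) p : tp := [seq (c.1, f c.2) | c <- p].

Lemma coef_wmap_img f p y : injective f -> coef (wmap f p) (f y) = coef p y.
Proof.
move=> fi; rewrite /coef big_map; apply: eq_bigr => c _ /=.
by rewrite (inj_eq fi).
Qed.

Lemma coef_wmap_out f p z : (forall y, f y <> z) -> coef (wmap f p) z = 0.
Proof.
move=> nz; rewrite /coef big_map big1 // => c _ /=.
by case: eqP => // e; case: (nz _ e).
Qed.

Lemma coef_inj f p p' : injective f -> coef p =1 coef p' ->
  coef (wmap f p) =1 coef (wmap f p').
Proof.
move=> fi E z; case: (classic (exists y, f y = z)) => [[y <-]|nz].
  by rewrite !coef_wmap_img.
have nz' : forall y, f y <> z by move=> y e; apply: nz; exists y.
by rewrite !coef_wmap_out.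
Qed.

Lemma wmap_cat f p q : wmap f (p ++ q) = wmap f p ++ wmap f q.
Proof. by rewrite /wmap map_cat. Qed.
Lemma wmap_scale f c p : wmap f (tscale c p) = tscale c (wmap f p).
Proof. by rewrite /wmap /tscale -!map_comp. Qed.
Lemma wmap_comp f g p : wmap f (wmap g p) = wmap (f \o g) p.
Proof. by rewrite /wmap -map_comp. Qed.
Lemma wmap_ext f g p : f =1 g -> wmap f p = wmap g p.
Proof. by move=> e; apply: eq_map => c; rewrite /= e. Qed.

Definition ctx u v := fun w => u ++ w ++ v.

Lemma ctx_inj u v : injective (ctx u v).
Proof.
move=> a b; rewrite /ctx => /eqP; rewrite eqseq_cat // => /andP[_ /eqP e].
have sz : size a = size b by move/(congr1 size): e; rewrite !size_cat => /addIn.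
by move/eqP: e; rewrite eqseq_cat // => /andP[/eqP].
Qed.

Lemma ctx_comp u v u' v' : ctx u v \o ctx u' v' =1 ctx (u ++ u') (v' ++ v).
Proof. by move=> w; rewrite /ctx /= -!catA. Qed.

Lemma termE a u g v :
  tmul (tmul (tscale a (tword K u)) g) (tword K v) =
  tscale a (wmap (ctx u v) g).
Proof.
rewrite /tmul /tscale /tword /wmap /= cats0.
elim: g => //= c g ->; by rewrite mulr1 mulr1 /ctx catA.
Qed.

Lemma coef_tmul p q w : coef (tmul p q) w =
  \sum_(a <- p) \sum_(b <- q) (if a.2 ++ b.2 == w then a.1 * b.1 else 0).
Proof. by rewrite /coef /tmul big_allpairs_dep. Qed.

Lemma coef_tmul_l p q w :
  coef (tmul p q) w = \sum_(a <- p) a.1 * coef (wmap (cat a.2) q) w.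
Proof.
rewrite coef_tmul; apply: eq_bigr => a _; rewrite /coef big_map mulr_sumr.
by apply: eq_bigr => b _ /=; case: ifP; rewrite ?mulr0.
Qed.

Lemma coef_tmul_r p q w :
  coef (tmul p q) w = \sum_(b <- q) b.1 * coef (wmap (cat^~ b.2) p) w.
Proof.
rewrite coef_tmul exchange_big; apply: eq_bigr => b _.
rewrite /coef big_map mulr_sumr.
by apply: eq_bigr => a _ /=; case: ifP; rewrite ?mulr0 // mulrC.
Qed.

Lemma catl_inj u : injective (cat u).
Proof. by move=> a b e; have := ctx_inj (u := u) (v := [::]); apply; rewrite /ctx !cats0. Qed.
Lemma catr_inj v : injective (cat^~ v).
Proof. by move=> a b e; have := ctx_inj (u := [::]) (v := v); apply. Qed.

Lemma coef_tmul_congr p p' q q' : coef p =1 coef p' -> coef q =1 coef q' ->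
  coef (tmul p q) =1 coef (tmul p' q').
Proof.
move=> Ep Eq w; rewrite coef_tmul_r.
under eq_bigr => b _ do rewrite (coef_inj (catr_inj (v:=b.2)) Ep).
rewrite -coef_tmul_r coef_tmul_l [RHS]coef_tmul_l.
by apply: eq_bigr => a _; rewrite (coef_inj (catl_inj (u:=a.2)) Eq).
Qed.

Lemma coef_cat_congr p p' q q' : coef p =1 coef p' -> coef q =1 coef q' ->
  coef (p ++ q) =1 coef (p' ++ q').
Proof. by move=> E1 E2 w; rewrite !coef_cat E1 E2. Qed.
Lemma coef_scale_congr c p p' : coef p =1 coef p' ->
  coef (tscale c p) =1 coef (tscale c p').
Proof. by move=> E w; rewrite !coef_scale E. Qed.

Variable G : tp -> Prop.
Local Notation Id := (in_ideal G).

Lemma Id_coef p p' : Id p -> coef p =1 coef p' -> Id p'.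
Proof. by case=> s [Hs E] E'; exists s; split => // w; rewrite -E'. Qed.

Lemma Id_nil : Id [::].
Proof. by exists [::]; split. Qed.

Lemma Id_add p q : Id p -> Id q -> Id (p ++ q).
Proof.
case=> s1 [H1 E1] [s2 [H2 E2]]; exists (s1 ++ s2); split.
  by move=> t; rewrite mem_cat => /orP[]; [apply: H1|apply: H2].
by move=> w; rewrite map_cat flatten_cat !coef_cat E1 E2.
Qed.

Lemma Id_scale c p : Id p -> Id (tscale c p).
Proof.
case=> s [H E]; exists [seq ((c * t.1.1.1, t.1.1.2), t.1.2, t.2) | t <- s]; split.
  by move=> t /mapP[t' t'in ->]; exact: (H _ t'in).
move=> w; rewrite coef_scale E !coef_flatten !big_map mulr_sumr.
by apply: eq_bigr => t _; rewrite !termE !coef_scale /= mulrA.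
Qed.

Lemma Id_wmap u v p : Id p -> Id (wmap (ctx u v) p).
Proof.
case=> s [H E]; exists [seq ((t.1.1.1, u ++ t.1.1.2), t.1.2, t.2 ++ v) | t <- s]; split.
  by move=> t /mapP[t' t'in ->]; exact: (H _ t'in).
move=> w; rewrite (coef_inj (ctx_inj (u:=u) (v:=v)) E).
rewrite /wmap map_flatten -/wmap !coef_flatten -!map_comp !big_map.
apply: eq_bigr => t _ /=; rewrite !termE.
rewrite -[[seq _ | _ <- _]]/(wmap (ctx u v) _) wmap_scale wmap_comp.
by rewrite (wmap_ext _ (ctx_comp _ _ _ _)).
Qed.


Lemma Id_gen a u v g : G g -> Id (tscale a (wmap (ctx u v) g)).
Proof.
move=> Gg; exists [:: ((a, u), g, v)]; split.
  by move=> t; rewrite inE => /eqP ->.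
by move=> w; rewrite /= cats0 termE.
Qed.

Definition eqv p q := Id (tsub p q).

Lemma eqv_coef p q : coef p =1 coef q -> eqv p q.
Proof.
move=> E; apply: (Id_coef Id_nil) => w.
by rewrite coef_nil coef_tsub E subrr.
Qed.

Lemma eqv_refl p : eqv p p.
Proof. exact: eqv_coef. Qed.

Lemma eqv_trans p q r : eqv p q -> eqv q r -> eqv p r.
Proof.
move=> H1 H2; apply: (Id_coef (Id_add H1 H2)) => w.
by rewrite coef_cat !coef_tsub addrA subrK.
Qed.

Lemma eqv_sym p q : eqv p q -> eqv q p.
Proof.
move=> H; apply: (Id_coef (Id_scale (-1) H)) => w.
by rewrite coef_scale !coef_tsub; ring.
Qed.

Lemma eqv_add p p' q q' : eqv p p' -> eqv q q' -> eqv (p ++ q) (p' ++ q').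
Proof.
move=> H1 H2; apply: (Id_coef (Id_add H1 H2)) => w.
by rewrite !(coef_cat, coef_tsub); ring.
Qed.

Lemma eqv_scale c p p' : eqv p p' -> eqv (tscale c p) (tscale c p').
Proof.
move=> H; apply: (Id_coef (Id_scale c H)) => w.
by rewrite !(coef_scale, coef_tsub); ring.
Qed.

Lemma eqv_wmap u v p p' : eqv p p' -> eqv (wmap (ctx u v) p) (wmap (ctx u v) p').
Proof.
move=> H; apply: (Id_coef (Id_wmap u v H)) => w.
by rewrite /tsub wmap_cat wmap_scale.
Qed.

Lemma eqv_coefl p p' q : coef p =1 coef p' -> eqv p' q -> eqv p q.
Proof. by move=> E; apply: eqv_trans; apply: eqv_coef. Qed.

End Gen.

Lemma coef_cons (K : fieldType) (A : eqType) (c : K * seq A) (p : tpoly K A) w :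
  coef (c :: p) w = (if c.2 == w then c.1 else 0) + coef p w.
Proof. by rewrite /coef big_cons. Qed.

Section Main.
Variables (K : fieldType) (d : Order.disp_t) (J : orderType d)
  (L : lmodType K) (br : L -> L -> L) (x : J -> L) (kappa : K)
  (hat : L -> tpoly K (option J)).
Hypothesis Hb : is_basis x.
Hypothesis Hk : kappa != 0.
Hypothesis Hhat : forall s : seq (K * J),
      coef (hat (lincomb x s)) =1 coef [seq (p.1, [:: Some p.2]) | p <- s].

Local Notation A := (option J).
Local Notation tp := (tpoly K A).
Definition G (r : tp) := @I_gens K d J r \/ R_gens br hat kappa r.
Local Notation Id := (in_ideal G).
Local Notation eqv := (@eqv K A G).
Fact W_key : unit. Proof. by []. Qed.
Definition W (w : seq A) : tp := locked_with W_key (tword K w).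
Lemma W_E w : W w = tword K w. Proof. by rewrite /W unlock. Qed.
Definition Bw (l : seq A) (s : seq (K * J)) (r : seq A) : tp :=
  [seq (p.1, l ++ Some p.2 :: r) | p <- s].

Lemma IREL l a r : eqv (W (l ++ None :: a ++ None :: r)) (W (l ++ None :: a ++ r)).
Proof.
have := @Id_gen K A G 1 l r (tsub (tmul (tmul (@qt K d J) (W a)) (@qt K d J)) (tmul (@qt K d J) (W a))).
case. by left; right; exists (W a).
move=> s [Hs E]; exists s; split => // w; rewrite -E !W_E.
rewrite /= !(coef_cons, coef_nil) /= /ctx /= -!catA /= !mul1r !mulr1.
done.
Qed.

Lemma hat_x i : coef (hat (x i)) =1 coef (W [:: Some i]).
Proof.
have -> : x i = lincomb x [:: (1, i)].
  by rewrite /lincomb big_cons big_nil addr0 scale1r.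
by move=> w; rewrite Hhat W_E.
Qed.

Lemma hat_br i j s : br (x i) (x j) = lincomb x s ->
  coef (hat (br (x i) (x j))) =1 coef (Bw [::] s [::]).
Proof. by move=> -> w; rewrite Hhat. Qed.

Lemma wmap_Bw l r l' s r' : wmap (ctx l r) (Bw l' s r') = Bw (l ++ l') s (r' ++ r).
Proof. by rewrite /wmap /Bw -map_comp; apply: eq_map => p /=; rewrite /ctx /= -!catA. Qed.

Definition Rw l r i j s : tp :=
  Bw l s r ++ tscale (-1) (W (l ++ [:: Some i, Some j & r])) ++
  W (l ++ [:: Some j, Some i & r]) ++ W (l ++ [:: Some i, Some j, None & r]) ++
  tscale (-1) (W (l ++ [:: Some j, Some i, None & r])) ++
  tscale (- kappa) (W (l ++ [:: Some i, None, Some j & r])) ++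
  tscale kappa (W (l ++ [:: Some j, None, Some i & r])).

Lemma REL0 l r i j s : br (x i) (x j) = lincomb x s -> Id (Rw l r i j s).
Proof.
move=> Hs.
set X := hat (x i); set Y := hat (x j); set Q := @qt K d J.
set g0 := tadd (tadd (tadd (tadd (tadd (tadd
          (hat (br (x i) (x j)))
          (tscale (-1) (tmul X Y)))
          (tmul Y X))
          (tmul (tmul X Y) Q))
          (tscale (-1) (tmul (tmul Y X) Q)))
          (tscale (- kappa) (tmul (tmul X Q) Y)))
          (tscale kappa (tmul (tmul Y Q) X)).
set X1 := W [:: Some i]; set Y1 := W [:: Some j].
set g1 := tadd (tadd (tadd (tadd (tadd (tadd
          (Bw [::] s [::])
          (tscale (-1) (tmul X1 Y1)))
          (tmul Y1 X1))
          (tmul (tmul X1 Y1) Q))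
          (tscale (-1) (tmul (tmul Y1 X1) Q)))
          (tscale (- kappa) (tmul (tmul X1 Q) Y1)))
          (tscale kappa (tmul (tmul Y1 Q) X1)).
have E01 : coef g0 =1 coef g1.
  have hX := hat_x i; have hY := hat_x j; have hB := hat_br Hs.
  rewrite /g0 /g1 /tadd.
  by repeat (apply: coef_cat_congr || apply: coef_scale_congr
     || apply: coef_tmul_congr || done).
have := @Id_gen K A G 1 l r g0.
case. by right; exists (x i), (x j).
move=> t [Ht E]; exists t; split => // w; rewrite -E coef_scale mul1r.
rewrite (coef_inj (ctx_inj (u:=l) (v:=r)) E01) /g1 /tadd !wmap_cat wmap_Bw cats0.
rewrite /Rw /X1 /Y1 !W_E /= !(coef_cons, coef_nil, coef_cat) /= /ctx /= -?catA /= !mul1r !mulr1.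
by ring.
Qed.

Arguments W : simpl never.
Arguments Bw : simpl never.

Ltac cexp := rewrite ?(coef_cat, coef_scale, coef_tsub).

Lemma D1 l r i j s : br (x i) (x j) = lincomb x s ->
  eqv (W (l ++ [:: Some i, None, Some j & r]))
      (W (l ++ [:: Some j, None, Some i & r]) ++ tscale kappa^-1 (Bw l s (None :: r))).
Proof.
move=> Hs.
have H0 := REL0 l (None :: r) Hs.
have H1 := IREL (l ++ [:: Some i; Some j]) [::] r.
have H2 := IREL (l ++ [:: Some j; Some i]) [::] r.
have H3 := IREL (l ++ [:: Some i]) [:: Some j] r.
have H4 := IREL (l ++ [:: Some j]) [:: Some i] r.
rewrite -?catA /= in H1 H2 H3 H4.
apply: (Id_coef (Id_scale (- kappa^-1) (Id_add H0 (Id_add (Id_scale (-1) H1)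
   (Id_add H2 (Id_add (Id_scale kappa H3) (Id_scale (- kappa) H4))))))).
move=> z; rewrite /Rw; cexp.
by field.
Qed.

Lemma D2 l r i j s : br (x i) (x j) = lincomb x s ->
  eqv (W (l ++ [:: Some i, Some j & r]))
      (W (l ++ [:: Some j, Some i & r]) ++ Bw l s r ++
       W (l ++ [:: Some i, Some j, None & r]) ++
       tscale (-1) (W (l ++ [:: Some j, Some i, None & r])) ++
       tscale (-1) (Bw l s (None :: r))).
Proof.
move=> Hs.
have H0 := REL0 l r Hs.
have H1 := D1 l r Hs.
apply: (Id_coef (Id_add (Id_scale (-1) H0) (Id_scale (- kappa) H1))).
move=> z; rewrite /Rw; cexp.
by field.
Qed.

Lemma coef_Bw_cons l p s r z :
  coef (Bw l (p :: s) r) z = p.1 * coef (W (l ++ Some p.2 :: r)) z + coef (Bw l s r) z.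
Proof. by rewrite /Bw W_E /= coef_cons coef_tword; case: ifP; rewrite ?mulr1 ?mulr0. Qed.

Lemma BwQ l a s r : eqv (Bw (l ++ None :: a) s (None :: r)) (Bw (l ++ None :: a) s r).
Proof.
elim: s => [|p s IH]; first exact: eqv_refl.
have H := IREL l (a ++ [:: Some p.2]) r.
rewrite -?catA /= in H.
apply: (Id_coef (Id_add (Id_scale p.1 H) IH)) => z.
cexp; rewrite !coef_Bw_cons -?catA /=; ring.
Qed.

Lemma D3 l a r i j s : br (x i) (x j) = lincomb x s ->
  eqv (W (l ++ None :: a ++ [:: Some i, Some j & r]))
      (W (l ++ None :: a ++ [:: Some j, Some i & r]) ++
       tscale kappa^-1 (Bw (l ++ None :: a) s r)).
Proof.
move=> Hs.
have H0 := D1 (l ++ None :: a) r Hs.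
have H1 := IREL l (a ++ [:: Some i]) (Some j :: r).
have H2 := IREL l (a ++ [:: Some j]) (Some i :: r).
have H3 := BwQ l a s r.
rewrite -?catA ?cat_cons ?cat0s in H0 H1 H2.
apply: (Id_coef (Id_add H0 (Id_add (Id_scale (-1) H1)
   (Id_add H2 (Id_scale kappa^-1 H3))))).
move=> z; cexp.
by field.
Qed.


Definition Red (p : tp) := exists g : tp,
  (forall cw, cw \in g -> model_word cw.2) /\ eqv p g.

Lemma Red_eqv p p' : eqv p p' -> Red p' -> Red p.
Proof. by move=> E [g [Hg E']]; exists g; split => //; apply: eqv_trans E E'. Qed.

Lemma Red_add p q : Red p -> Red q -> Red (p ++ q).
Proof.
move=> [g1 [H1 E1]] [g2 [H2 E2]]; exists (g1 ++ g2); split.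
  by move=> cw; rewrite mem_cat => /orP[]; [apply: H1|apply: H2].
exact: eqv_add.
Qed.

Lemma Red_scale c p : Red p -> Red (tscale c p).
Proof.
move=> [g [H E]]; exists (tscale c g); split; last exact: eqv_scale.
by move=> cw /mapP[cw' cw'in ->]; exact: (H _ cw'in).
Qed.

Lemma Red_nil : Red [::].
Proof. by exists [::]; split => //; apply: eqv_refl. Qed.

Lemma Red_model w : model_word w -> Red (W w).
Proof.
move=> Hw; exists (W w); split; last exact: eqv_refl.
by move=> cw; rewrite W_E inE => /eqP ->.
Qed.

Lemma Red_list (p : tp) : (forall c, c \in p -> Red (W c.2)) -> Red p.
Proof.
elim: p => [|c p IH] H; first exact: Red_nil.
apply: (@Red_eqv _ (tscale c.1 (W c.2) ++ p)).
  apply: eqv_coef => z; rewrite coef_cons coef_cat coef_scale W_E coef_tword.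
  by case: ifP; rewrite ?mulr1 ?mulr0.
apply: Red_add; first by apply: Red_scale; apply: H; rewrite inE eqxx.
by apply: IH => c' Hc'; apply: H; rewrite inE Hc' orbT.
Qed.

Lemma Red_Bw l s r : (forall y, Red (W (l ++ Some y :: r))) -> Red (Bw l s r).
Proof. by move=> H; apply: Red_list => c /mapP[p _ ->] /=; exact: H. Qed.

Fixpoint ins (z : J) (w : seq J) : seq J :=
  if w is y :: w' then (if (z <= y)%O then z :: w else y :: ins z w') else [:: z].
Fixpoint isort (w : seq J) : seq J :=
  if w is a :: v then ins a (isort v) else [::].

Lemma size_ins z w : size (ins z w) = (size w).+1.
Proof. by elim: w => //= a w IH; case: ifP => //= _; rewrite IH. Qed.
Lemma size_isort w : size (isort w) = size w.
Proof. by elim: w => //= a w IH; rewrite size_ins IH. Qed.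

Lemma path_ins y z w : path (@Order.le d J) y w -> (y <= z)%O ->
  path (@Order.le d J) y (ins z w).
Proof.
elim: w y => [|a w IH] y /=; first by move=> _ ->.
case/andP => ya pa yz; case: ifP => za /=.
  by rewrite yz za.
rewrite ya /=; apply: IH => //; apply: ltW; by rewrite ltNge za.
Qed.

Lemma sorted_ins z w : sorted (@Order.le d J) w -> sorted (@Order.le d J) (ins z w).
Proof.
case: w => //= a w pa; case: ifP => za /=; first by rewrite za.
by apply: path_ins => //; apply: ltW; rewrite ltNge za.
Qed.

Lemma sorted_isort w : sorted (@Order.le d J) (isort w).
Proof. by elim: w => //= a w IH; apply: sorted_ins. Qed.

Lemma path_isort y w : all (fun z => (y <= z)%O) w -> path (@Order.le d J) y (isort w).
Proof.
elim: w => //= a w IH /andP[ya yw]; apply: path_ins => //; exact: IH.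
Qed.

Section SortGen.
Variable Pw : seq A -> Prop.
Variable ok : seq A -> seq A -> Prop.
Hypothesis Hsw : forall l r i j, ok l r ->
  Pw (l ++ Some j :: Some i :: r) -> Pw (l ++ Some i :: Some j :: r).

Lemma ins_gen r z w : forall l,
  (forall s1 s2, ok (l ++ map Some s1) (map Some s2 ++ r)) ->
  Pw (l ++ map Some (ins z w) ++ r) -> Pw (l ++ Some z :: map Some w ++ r).
Proof.
elim: w => [|a w IH] l Hc //=; case: ifP => za //= H.
apply: Hsw; first by have := Hc [::] w; rewrite cats0.
move: (IH (l ++ [:: Some a])); rewrite -!catA /=; apply; last exact: H.
by move=> s1 s2; have := Hc (a :: s1) s2; rewrite -catA.
Qed.

Lemma sort_gen r v : forall l,
  (forall s1 s2, ok (l ++ map Some s1) (map Some s2 ++ r)) ->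
  Pw (l ++ map Some (isort v) ++ r) -> Pw (l ++ map Some v ++ r).
Proof.
elim: v => [|a v IH] l Hc //= H.
move: (IH (l ++ [:: Some a])); rewrite -!catA /=; apply.
  by move=> s1 s2; have := Hc (a :: s1) s2; rewrite -catA.
by apply: ins_gen.
Qed.
End SortGen.

Lemma split_first (z : A) s : z \in s -> exists u r, s = u ++ z :: r /\ z \notin u.
Proof.
elim: s => // a s IH; rewrite inE; case: (eqVneq z a) => [->|nza] /= H.
  by exists [::], s.
have [u [r [-> Hu]]] := IH H; exists (a :: u), r; split => //.
by rewrite inE negb_or Hu andbT; apply: contra_neq nza => ->.
Qed.

Lemma qfree (w : seq A) : None \notin w -> exists v, w = map Some v.
Proof.
elim: w => [|a w IH]; first by exists [::].
rewrite inE negb_or => /andP[na /IH[v ->]].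
by case: a na => // a _; exists (a :: v).
Qed.

Lemma notin_map (s : seq J) : None \notin map Some s.
Proof. by apply/mapP => -[]. Qed.

Lemma get_s i j : exists s, br (x i) (x j) = lincomb x s.
Proof. exact: Hb.2. Qed.

Lemma Qsort n : (forall w, (size w < n)%N -> None \in w -> Red (W w)) ->
  forall l v r, None \in l -> size (l ++ map Some v ++ r) = n ->
  Red (W (l ++ map Some (isort v) ++ r)) -> Red (W (l ++ map Some v ++ r)).
Proof.
move=> IH l v r Hl Hsz H.
pose Pw w := size w = n -> Red (W w).
suff: Pw (l ++ map Some v ++ r) by apply.
apply: (@sort_gen Pw (fun l _ => None \in l)); last by move=> _; apply: H.
- move=> l' r' i j Hl' Hp Hsz'.
  have H1 : Red (W (l' ++ Some j :: Some i :: r')) by apply: Hp; rewrite -Hsz' !size_cat.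
  have [u [a [El' _]]] := split_first Hl'.
  have [s Hs] := get_s i j.
  subst l'; rewrite -catA cat_cons in H1 *.
  rewrite -catA cat_cons.
  apply: (Red_eqv (D3 u a r' Hs)); apply: Red_add => //.
  apply: Red_scale; apply: Red_Bw => y; apply: IH.
    by move: Hsz'; rewrite !size_cat /=; rewrite ?size_cat /=; lia.
  by rewrite !mem_cat inE eqxx /= orbT.
- by move=> s1 s2; rewrite mem_cat Hl.
Qed.

Lemma ClaimA n : forall w, size w = n -> None \in w -> Red (W w).
Proof.
elim/ltn_ind: n => n IHn.
have IHn' : forall w, (size w < n)%N -> None \in w -> Red (W w).
  by move=> w Hw; apply: (IHn _ Hw).
move=> w Hsz Hin.
have [u [r [Ew Hu]]] := split_first Hin.
suff: forall p u r, size u = p -> None \notin u -> size (u ++ None :: r) = n ->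
    Red (W (u ++ None :: r)).
  by move=> H; rewrite Ew; apply: (H _ u r) => //; rewrite -Ew.
clear w Hsz Hin u r Ew Hu.
elim/ltn_ind => p IHp u r Hu Hnu Hsz.
case: (boolP (None \in r)) => Hr.
  have [a [b [Er _]]] := split_first Hr; subst r.
  apply: (Red_eqv (IREL u a b)); apply: IHn'.
    by move: Hsz; rewrite !size_cat /=; rewrite ?size_cat /=; lia.
  by rewrite mem_cat inE eqxx orbT.
have [v Ev] := qfree Hr; subst r.
suff Hs: Red (W (u ++ None :: map Some (isort v))).
  have := Qsort IHn' (l := u ++ [:: None]) (v := v) (r := [::]).
  rewrite -!catA !cats0 /=; apply => //.
  by rewrite mem_cat inE eqxx orbT.
have sv' := sorted_isort v.
have szv' : size (u ++ None :: map Some (isort v)) = n.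
  by rewrite -Hsz !size_cat /= !size_map size_isort.
move: (isort v) sv' szv' => v' sv' szv'; clear v Hr Hsz.
have [su Esu] := qfree Hnu; subst u.
case/lastP: su Hu Hnu szv' => [|su' j0] Hu Hnu szv'.
  by apply: Red_model; left; exists v'.
rewrite map_rcons -cats1 -catA /= in szv' *.
pose Pw w := size w = n -> index None w = p -> Red (W w).
suff Hp: Red (W (map Some (isort su') ++ Some j0 :: None :: map Some v')).
  have: Pw ([::] ++ map Some su' ++ (Some j0 :: None :: map Some v')); last first.
    apply => //; rewrite -Hu /= index_cat (negbTE (notin_map _)) /=.
    by rewrite size_map size_map size_rcons addn1.
  apply: (@sort_gen Pw (fun l r => None \notin l /\
             exists c r'', r = Some c :: r'' /\ None \in r''));
    last by move=> _ _.
  - move=> l' r' i j [Hl' [c [r'' [Er' Hr'']]]] Hp' Hsz' Hidx.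
    have [b [v2 [Er'' Hb']]] := split_first Hr''.
    subst r' r''.
    have [s Hs] := get_s i j.
    have Hidx' : (size l' + 2 < p)%N.
      by move: Hidx; rewrite index_cat (negbTE Hl') /=; lia.
    have IHp' : forall u r, None \notin u -> (size u < p)%N ->
        size (u ++ None :: r) = n -> Red (W (u ++ None :: r)).
      by move=> u0 r0 H0 H1 H2; apply: (IHp _ H1).
    apply: (Red_eqv (D2 l' (Some c :: b ++ None :: v2) Hs)).
    apply: Red_add; first apply: Hp'.
    + by move: Hsz'; rewrite !size_cat.
    + by move: Hidx; rewrite !index_cat (negbTE Hl').
    apply: Red_add.
      apply: Red_Bw => y; apply: IHn'.
        by move: Hsz'; rewrite !size_cat /= !size_cat /=; lia.
      by rewrite !(mem_cat, inE) eqxx !orbT.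
    apply: Red_add.
      have H := IREL (l' ++ [:: Some i; Some j]) (Some c :: b) v2.
      rewrite -!catA !cat_cons !cat0s in H.
      apply: (Red_eqv H).
      have := IHp' (l' ++ [:: Some i; Some j]) (Some c :: b ++ v2).
      rewrite -!catA !cat_cons !cat0s; apply.
      * by rewrite mem_cat (negbTE Hl').
      * by rewrite size_cat.
      * by move: Hsz'; rewrite !size_cat /= !size_cat /=; lia.
    apply: Red_add.
      apply: Red_scale.
      have H := IREL (l' ++ [:: Some j; Some i]) (Some c :: b) v2.
      rewrite -!catA !cat_cons !cat0s in H.
      apply: (Red_eqv H).
      have := IHp' (l' ++ [:: Some j; Some i]) (Some c :: b ++ v2).
      rewrite -!catA !cat_cons !cat0s; apply.
      * by rewrite mem_cat (negbTE Hl').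
      * by rewrite size_cat.
      * by move: Hsz'; rewrite !size_cat /= !size_cat /=; lia.
    apply: Red_scale; apply: Red_Bw => y.
    have H := IREL (l' ++ [:: Some y]) (Some c :: b) v2.
    rewrite -!catA !cat_cons !cat0s in H.
    apply: (Red_eqv H); apply: IHn'.
      by move: Hsz'; rewrite !size_cat /= !size_cat /=; lia.
    by rewrite !(mem_cat, inE) eqxx !orbT.
  - move=> s1 s2; split; first exact: notin_map.
    case: s2 => [|c s2] /=; first by exists j0, (None :: map Some v'); rewrite inE eqxx.
    exists c, (map Some s2 ++ Some j0 :: None :: map Some v'); split => //.
    by rewrite !(mem_cat, inE) eqxx !orbT.
have ss1 := sorted_isort su'.
have szs : size (map Some (isort su') ++ [:: Some j0, None & map Some v']) = n.
  by rewrite -szv' !size_cat !size_map size_isort.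
move: (isort su') ss1 szs => s1 ss1 szs.
case: v' sv' szv' szs => [|y v''] sv' _ szs.
  by apply: Red_model; right; left; exists s1, j0, [::].
case: (boolP (j0 <= y)%O) => hj.
  apply: Red_model; right; left; exists s1, j0, (y :: v''); split => //.
  by rewrite /jsorted /= hj.
have [s Hs] := get_s j0 y.
apply: (Red_eqv (D1 (map Some s1) (map Some v'') Hs)); apply: Red_add.
  have := Qsort IHn' (l := map Some s1 ++ [:: Some y; None]) (v := j0 :: v'') (r := [::]).
  rewrite -!catA !cats0 /=; apply.
  - by rewrite mem_cat !inE eqxx !orbT.
  - by move: szs; rewrite !size_cat.
  apply: Red_model; right; left; exists s1, y, (isort (j0 :: v'')); split => //.
  split => //; rewrite /jsorted; apply: (@path_isort y (j0 :: v'')) => /=.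
  rewrite (ltW _) /=; last by rewrite ltNge.
  exact: le_path_min sv'.
apply: Red_scale; apply: Red_Bw => z; apply: IHn'.
  by move: szs; rewrite !size_cat /= !size_map; lia.
by rewrite !(mem_cat, inE) eqxx !orbT.
Qed.

Lemma ClaimB n : forall w, size w = n -> Red (W w).
Proof.
elim/ltn_ind: n => n IHn w Hsz.
case: (boolP (None \in w)) => Hin; first exact: (ClaimA Hsz).
have [v Ev] := qfree Hin; subst w.
pose Pw w := size w = n -> Red (W w).
suff: Pw ([::] ++ map Some v ++ [::]) by rewrite cats0; apply.
apply: (@sort_gen Pw (fun _ _ => True)) => //.
- move=> l' r' i j _ Hp Hsz'.
  have [s Hs] := get_s i j.
  apply: (Red_eqv (D2 l' r' Hs)).
  apply: Red_add; first by apply: Hp; move: Hsz'; rewrite !size_cat.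
  apply: Red_add.
    apply: Red_Bw => y; apply: (IHn (size (l' ++ Some y :: r'))) => //.
    by move: Hsz'; rewrite !size_cat /=; lia.
  apply: Red_add.
    by apply: (ClaimA erefl); rewrite !(mem_cat, inE) eqxx !orbT.
  apply: Red_add.
    by apply: Red_scale; apply: (ClaimA erefl); rewrite !(mem_cat, inE) eqxx !orbT.
  apply: Red_scale; apply: Red_Bw => y; apply: (ClaimA erefl).
  by rewrite !(mem_cat, inE) eqxx !orbT.
- move=> _; rewrite cats0 /=; apply: Red_model; right; right.
  by exists (isort v); split => //; apply: sorted_isort.
Qed.

Lemma main_res (f : tp) : exists g : tp,
      (forall cw, cw \in g -> model_word cw.2) /\
      in_ideal (fun r => I_gens r \/ R_gens br hat kappa r) (tsub f g).
Proof.
have [g [Hg E]] : Red f by apply: Red_list => c _; exact: (ClaimB erefl).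
by exists g.
Qed.

End Main.

Unset Implicit Arguments.
Theorem proposition5p1 (K : fieldType) (d : Order.disp_t) (J : orderType d)
  (L : lmodType K) (br : L -> L -> L) (x : J -> L) (kappa : K)
  (hat : L -> tpoly K (option J)) :
  is_lie_bracket br ->
  is_basis x ->
  kappa != 0 ->
  (forall s : seq (K * J),
      coef (hat (lincomb x s)) =1 coef [seq (p.1, [:: Some p.2]) | p <- s]) ->
  forall f : tpoly K (option J),
    exists g : tpoly K (option J),
      (forall cw, cw \in g -> model_word cw.2) /\
      in_ideal (fun r => I_gens r \/ R_gens br hat kappa r) (tsub f g).
Proof. move=> _ Hb Hk Hhat f. exact: (main_res br Hb Hk Hhat f). Qed.
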